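(* Let $n,m\ge 3$, let $G=(V,E)=P_n\square P_m$ be the grid graph, and let $R\subseteq V$. If every vertex of $G$ has a locally resolved neighbourhood with respect to $R$, then $R$ is a resolving set for $G$.
   Context: The grid graph $P_n\square P_m$ has vertex set $\{(i,j):0\le i\le n-1,\ 0\le j\le m-1\}$, with $(i,j)$ adjacent to $(k,l)$ iff $|i-k|+|j-l|=1$; the distance is $d((i,j),(k,l))=|i-k|+|j-l|$. A vertex $w$ resolves two vertices $u,v$ if $d(w,u)\ne d(w,v)$. A set $R$ is resolving if every pair of distinct vertices is resolved by some vertex of $R$. A vertex $x$ has a locally resolved neighbourhood with respect to $R$ if every pair of distinct neighbours of $x$ is resolved by some vertex of $R$. *)

(* Defs.v *)
From mathcomp Require Import all_boot.
Set Implicit Arguments. Unset Strict Implicit. Unset Printing Implicit Defensive.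

Definition absdiff (a b : nat) : nat := (a - b) + (b - a).

Definition grid_dist n m (u v : 'I_n * 'I_m) : nat :=
  absdiff u.1 v.1 + absdiff u.2 v.2.

Definition grid_adj n m (u v : 'I_n * 'I_m) : bool := grid_dist u v == 1.

Definition resolves n m (w u v : 'I_n * 'I_m) : bool :=
  grid_dist w u != grid_dist w v.

Definition resolving n m (R : {set 'I_n * 'I_m}) : Prop :=
  forall u v : 'I_n * 'I_m, u != v -> exists2 w, w \in R & resolves w u v.

Definition locally_resolved n m (R : {set 'I_n * 'I_m}) (x : 'I_n * 'I_m) : Prop :=
  forall u v : 'I_n * 'I_m, grid_adj x u -> grid_adj x v -> u != v ->
    exists2 w, w \in R & resolves w u v.

(* Main.v *)
Require Import Defs.
From mathcomp Require Import all_boot zify.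

Lemma c1 a b c d i j w1 w2 : a <= i < c -> b <= j < d -> (i+j).*2 + 2 = a+b+c+d ->
 absdiff w1 i + absdiff w2 j != absdiff w1 i.+1 + absdiff w2 j.+1 ->
 absdiff w1 a + absdiff w2 b != absdiff w1 c + absdiff w2 d.
Proof. rewrite /absdiff => /andP[h1 h2] /andP[h3 h4] h5.
case: (leqP w1 i) => h6; case: (leqP w2 j) => h7; lia. Qed.

Lemma c2 a b c d i j w1 w2 : a <= i < c -> d <= j < b -> (i.*2 + b + d = a + c + j.*2) ->
 absdiff w1 i + absdiff w2 j.+1 != absdiff w1 i.+1 + absdiff w2 j ->
 absdiff w1 a + absdiff w2 b != absdiff w1 c + absdiff w2 d.
Proof. rewrite /absdiff => /andP[h1 h2] /andP[h3 h4] h5.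
case: (leqP w1 i) => h6; case: (leqP w2 j) => h7; lia. Qed.

Lemma c3 a c b e w1 w2 : a < c -> e.*2 = a + c ->
 absdiff w1 (e - 1) + absdiff w2 b != absdiff w1 e.+1 + absdiff w2 b ->
 absdiff w1 a + absdiff w2 b != absdiff w1 c + absdiff w2 b.
Proof. rewrite /absdiff => h1 h2. case: (leqP w1 e) => h6; lia. Qed.

Lemma c4 a b d e w1 w2 : b < d -> e.*2 = b + d ->
 absdiff w1 a + absdiff w2 (e - 1) != absdiff w1 a + absdiff w2 e.+1 ->
 absdiff w1 a + absdiff w2 b != absdiff w1 a + absdiff w2 d.
Proof. rewrite /absdiff => h1 h2. case: (leqP w2 e) => h6; lia. Qed.

Definition good a b c d (i j k l x y : nat) :=
  [/\ (i <= maxn a c) && (k <= maxn a c) && (x <= maxn a c),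
      (j <= maxn b d) && (l <= maxn b d) && (y <= maxn b d),
      absdiff x i + absdiff y j = 1 /\ absdiff x k + absdiff y l = 1,
      (i != k) || (j != l) &
      forall w1 w2, absdiff w1 i + absdiff w2 j != absdiff w1 k + absdiff w2 l ->
        absdiff w1 a + absdiff w2 b != absdiff w1 c + absdiff w2 d].

Lemma flip (p q x y : nat) : (p != q -> x != y) -> p != q -> y != x.
Proof. by move=> H /H; rewrite eq_sym. Qed.

Ltac fin L := split; [ | | | | move=> w1 w2; apply: L; lia ]; rewrite /absdiff; try split; lia.
Ltac finf L := split; [ | | | | move=> w1 w2; apply: flip; apply: L; lia ]; rewrite /absdiff; try split; lia.

Lemma key a b c d : (a != c) || (b != d) -> ~~ odd (absdiff a c + absdiff b d) ->
  exists i j k l x y, good a b c d i j k l x y.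
Proof.
move=> hne hodd.
have hs := odd_double_half (absdiff a c + absdiff b d).
rewrite (negbTE hodd) add0n in hs.
move: hs; set h := (_ ./2) => hs.
case: (ltngtP a c) => hac; case: (ltngtP b d) => hbd.
- have {hs} E : c + d = a + b + h.*2 by move: hs; rewrite /absdiff; lia.
  clearbody h.
  have [t [ht1 ht2 ht3]] : exists t, [/\ t < h, a + t < c & b + (h - 1 - t) < d].
    by exists (minn (h - 1) (c - a - 1)); split; lia.
  exists (a + t), (b + (h - 1 - t)), (a + t).+1, (b + (h - 1 - t)).+1, (a+t).+1, (b + (h - 1 - t)).
  fin c1.
- have {hs} E : c + b = a + d + h.*2 by move: hs; rewrite /absdiff; lia.
  clearbody h.
  have [t [ht1 ht2 ht3]] : exists t, [/\ t < h, a + t < c & d + h <= b + t].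
    by exists (minn (h - 1) (c - a - 1)); split; lia.
  exists (a + t), (b + t - h).+1, (a + t).+1, (b + t - h), (a+t).+1, (b + t - h).+1.
  fin c2.
- subst d.
  have {hs} E : c = a + h.*2 by move: hs; rewrite /absdiff; lia.
  clearbody h.
  exists (a+h-1), b, (a+h).+1, b, (a+h), b.
  fin c3.
- have {hs} E : a + d = c + b + h.*2 by move: hs; rewrite /absdiff; lia.
  clearbody h.
  have [t [ht1 ht2 ht3]] : exists t, [/\ t < h, c + t < a & b + h <= d + t].
    by exists (minn (h - 1) (a - c - 1)); split; lia.
  exists (c + t), (d + t - h).+1, (c + t).+1, (d + t - h), (c+t).+1, (d + t - h).+1.
  finf c2.
- have {hs} E : a + b = c + d + h.*2 by move: hs; rewrite /absdiff; lia.
  clearbody h.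
  have [t [ht1 ht2 ht3]] : exists t, [/\ t < h, c + t < a & d + (h - 1 - t) < b].
    by exists (minn (h - 1) (a - c - 1)); split; lia.
  exists (c + t), (d + (h - 1 - t)), (c + t).+1, (d + (h - 1 - t)).+1, (c+t).+1, (d + (h - 1 - t)).
  finf c1.
- subst d.
  have {hs} E : a = c + h.*2 by move: hs; rewrite /absdiff; lia.
  clearbody h.
  exists (c+h-1), b, (c+h).+1, b, (c+h), b.
  finf c3.
- subst c.
  have {hs} E : d = b + h.*2 by move: hs; rewrite /absdiff; lia.
  clearbody h.
  exists a, (b+h-1), a, (b+h).+1, a, (b+h).
  fin c4.
- subst c.
  have {hs} E : b = d + h.*2 by move: hs; rewrite /absdiff; lia.
  clearbody h.
  exists a, (d+h-1), a, (d+h).+1, a, (d+h).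
  finf c4.
- by rewrite hac hbd !eqxx in hne.
Qed.

Lemma odd_absdiff x y : odd (absdiff x y) = odd x (+) odd y.
Proof.
rewrite /absdiff; case: (leqP x y) => h.
- by rewrite (eqP (_ : x - y == 0)) ?subn_eq0 // add0n oddB // addbC.
- by rewrite (eqP (_ : y - x == 0)) ?subn_eq0 ?(ltnW h) // addn0 oddB // ltnW.
Qed.

Lemma odd2 x y z t : odd (absdiff x y + absdiff z t) = (odd x (+) odd y) (+) (odd z (+) odd t).
Proof. by rewrite (oddD (absdiff x y)) !odd_absdiff. Qed.

Theorem theorem3 (n m : nat) (R : {set 'I_n * 'I_m}) :
  3 <= n -> 3 <= m ->
  (forall x : 'I_n * 'I_m, locally_resolved R x) ->
  resolving R.
Proof.
move=> hn hm hloc [[a ha] [b hb]] [[c hc] [d hd]] huv.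
have hne : (a != c) || (b != d).
  case: eqP => [e1|//]; case: eqP => [e2|//]; exfalso.
  move/eqP: huv; apply; congr (_, _); apply: val_inj => //=.
case hodd: (odd (absdiff a c + absdiff b d)).
- have h0n : 0 < n by apply: leq_trans hn.
  have h0m : 0 < m by apply: leq_trans hm.
  have h1m : 1 < m by apply: leq_trans hm.
  have h2m : 2 < m by [].
  have hne2 : (Ordinal h0n, Ordinal h0m) != (Ordinal h0n, Ordinal h2m) :> 'I_n * 'I_m by [].
  have [w wR _] := hloc (Ordinal h0n, Ordinal h1m) (Ordinal h0n, Ordinal h0m)
     (Ordinal h0n, Ordinal h2m) erefl erefl hne2.
  exists w => //; rewrite /resolves /grid_dist /=.
  apply/negP => /eqP e.
  have := congr1 odd e; rewrite !odd2.
  move: hodd; rewrite odd2.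
  by case: (odd a); case: (odd b); case: (odd c); case: (odd d);
     case: (odd w.1); case: (odd w.2).
- have [i [j [k [l [x [y [hb1 hb2 [hxp hxq] hpq himp]]]]]]] := @key a b c d hne (negbT hodd).
  move: hb1 hb2 => /andP[/andP[hi hk] hx] /andP[/andP[hj hl] hy].
  have lt1 : forall z, z <= maxn a c -> z < n.
    by move=> z hz; apply: leq_ltn_trans hz _; rewrite gtn_max ha hc.
  have lt2 : forall z, z <= maxn b d -> z < m.
    by move=> z hz; apply: leq_ltn_trans hz _; rewrite gtn_max hb hd.
  have hpq' : (Ordinal (lt1 _ hi), Ordinal (lt2 _ hj)) != (Ordinal (lt1 _ hk), Ordinal (lt2 _ hl)).
    case/orP: hpq => hpq; apply/negP => /eqP [e1 e2]; by rewrite ?e1 ?e2 eqxx in hpq.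
  have [w wR hw] := hloc (Ordinal (lt1 _ hx), Ordinal (lt2 _ hy))
     (Ordinal (lt1 _ hi), Ordinal (lt2 _ hj)) (Ordinal (lt1 _ hk), Ordinal (lt2 _ hl))
     (introT eqP hxp) (introT eqP hxq) hpq'.
  exists w => //; exact: himp.
Qed.
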